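(* Let $A=[a_{ij}]$ be an $n\times n$ row-stochastic matrix with positive diagonal entries, and assume the smallest positive entry of $A$ is at least $\eta>0$. Let $w_{ij}$ be the $(i,j)$-th entry of $A^TA$. Let $(S^-,S^+)$ be a partition of $N=\{1,\dots,n\}$ into two disjoint sets. If $\sum_{i\in S^-,\,j\in S^+}w_{ij}>0$, then \[\sum_{i\in S^-,\,j\in S^+}w_{ij}\ge\frac\eta2.\]
   Context: A matrix is row-stochastic if it is nonnegative and each row sums to $1$. *)

(* Defs.v *)
From mathcomp Require Import all_boot all_order all_algebra.
Set Implicit Arguments. Unset Strict Implicit. Unset Printing Implicit Defensive.
Import Order.TTheory GRing.Theory Num.Theory.
Local Open Scope ring_scope.

Definition row_stochastic (R : numDomainType) (n : nat) (A : 'M[R]_n) : Prop :=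
  (forall i j, 0 <= A i j) /\ (forall i, \sum_(j < n) A i j = 1).

(* Main.v *)
Require Import Defs.
From mathcomp Require Import all_boot all_order all_algebra.
From mathcomp Require Import lra.
Import Order.TTheory GRing.Theory Num.Theory.
Local Open Scope ring_scope.

Lemma pos_sum_ge (R : realFieldType) (n : nat) (P : {pred 'I_n}) (F : 'I_n -> R) (eta : R) :
  (forall j, 0 <= F j) -> (forall j, 0 < F j -> eta <= F j) ->
  0 < \sum_(j in P) F j -> eta <= \sum_(j in P) F j.
Proof.
move=> F0 Fe Hs.
have : [exists j in P, 0 < F j].
  apply: contraT => /exists_inPn H.
  have : \sum_(j in P) F j <= 0.
    apply: sumr_le0 => j Pj; move: (H j Pj); rewrite -leNgt //.
  by rewrite leNgt Hs.
case/exists_inP => j Pj Fj.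
rewrite (bigD1 j) //=; apply: le_trans (Fe _ Fj) _.
by rewrite lerDl sumr_ge0.
Qed.

Theorem lemma2 (R : realFieldType) (n : nat) (A : 'M[R]_n) (eta : R)
  (Sm : {set 'I_n}) :
  row_stochastic A ->
  (forall i, 0 < A i i) ->
  0 < eta ->
  (forall i j, 0 < A i j -> eta <= A i j) ->
  0 < \sum_(i in Sm) \sum_(j in ~: Sm) (A^T *m A) i j ->
  eta / 2 <= \sum_(i in Sm) \sum_(j in ~: Sm) (A^T *m A) i j.
Proof.
move=> [A0 A1] _ He Hmin.
have E : \sum_(i in Sm) \sum_(j in ~: Sm) (A^T *m A) i j =
   \sum_(k < n) ((\sum_(i in Sm) A k i) * (\sum_(j in ~: Sm) A k j)).
  under eq_bigr => i _ do under eq_bigr => j _ do rewrite mxE.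
  under eq_bigr => i _ do rewrite exchange_big /=.
  rewrite exchange_big /=; apply: eq_bigr => k _.
  rewrite mulr_suml; apply: eq_bigr => i _; rewrite mulr_sumr.
  by apply: eq_bigr => j _; rewrite mxE.
rewrite E => Hpos.
set F := fun k => (\sum_(i in Sm) A k i) * (\sum_(j in ~: Sm) A k j).
have F0 : forall k, 0 <= F k by move=> k; rewrite /F mulr_ge0 // sumr_ge0.
have : [exists k, 0 < F k].
  apply: contraT => /existsPn H.
  have : \sum_(k < n) F k <= 0.
    apply: sumr_le0 => k _; move: (H k); rewrite -leNgt //.
  by rewrite leNgt Hpos.
case/existsP => k Fk.
have Fke : eta / 2 <= F k.
  set s := \sum_(i in Sm) A k i.
  set t := \sum_(j in ~: Sm) A k j.
  have s0 : 0 <= s by rewrite sumr_ge0.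
  have t0 : 0 <= t by rewrite sumr_ge0.
  have st : s + t = 1.
    by rewrite -(A1 k) (bigID (fun j => j \in Sm)) /=; congr (_ + _);
       apply: eq_bigl => j; rewrite inE.
  have Fst : 0 < s * t by [].
  have sp : 0 < s.
    rewrite lt_neqAle s0 andbT; apply/eqP => E0.
    by move: Fst; rewrite -E0 mul0r ltxx.
  have tp : 0 < t.
    rewrite lt_neqAle t0 andbT; apply/eqP => E0.
    by move: Fst; rewrite -E0 mulr0 ltxx.
  have se : eta <= s by apply: pos_sum_ge => // j; apply: Hmin.
  have te : eta <= t by apply: pos_sum_ge => // j; apply: Hmin.
  rewrite /F -/s -/t.
  have -> : t = 1 - s by lra.
  have [h|h] := lerP s (1/2).
    nra.
  nra.
rewrite (bigD1 k) //=; apply: le_trans Fke _.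
by rewrite lerDl; apply: sumr_ge0 => i _; apply: F0.
Qed.
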